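(* For any voter matrix $V$ with $t$ topics, there exists a proposal $p$ supported by $V$ with $R_p\ge \frac12-\frac1t$. In particular, $r_V\ge \frac23-\frac{4}{3t}$.
   Context: A voter matrix with $t$ topics is a matrix $V\in\{Y,N\}^{n\times t}$ for positive integers $n,t$ (rows are voters), subject to the standing assumption that in every column the number of entries $Y$ is at least the number of entries $N$. A proposal is a vector $p\in\{Y,N\}^t$. A voter $v$ supports $p$ if the Hamming distance between $v$ and $p$ is at most $t/2$; $p$ is supported by $V$ if at least $n/2$ rows of $V$ support $p$. For $i=1,\dots,t$ let $m_i$ be the fraction of entries $Y$ in column $i$ of $V$, and $m_V=\frac1t\sum_i m_i$. For a proposal $p$ let $m_i'=m_i$ if $p_i=Y$ and $m_i'=1-m_i$ if $p_i=N$; set $R_p=\frac1t\sum_i m_i'$ and $r_p=R_p/m_V$. $r_V$ is the maximum of $r_p$ over all proposals $p$ supported by $V$. *)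

(* Defs.v *)
From mathcomp Require Import all_boot all_order all_algebra.
Set Implicit Arguments. Unset Strict Implicit. Unset Printing Implicit Defensive.
Import Order.TTheory GRing.Theory Num.Theory.
Local Open Scope ring_scope.

(* A voter matrix: n voters (rows), t topics (columns), entries Y=true / N=false. *)
Definition voter_matrix (n t : nat) := 'M[bool]_(n, t).
Definition proposal (t : nat) := {ffun 'I_t -> bool}.

Definition col_majority_Y n t (V : voter_matrix n t) : Prop :=
  forall i : 'I_t, (#|[set k | ~~ V k i]| <= #|[set k | V k i]|)%N.

Definition hdist n t (V : voter_matrix n t) (k : 'I_n) (p : proposal t) : nat :=
  #|[set i : 'I_t | V k i != p i]|.

Definition supports n t (V : voter_matrix n t) (k : 'I_n) (p : proposal t) : bool :=
  (2 * hdist V k p <= t)%N.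

Definition supported n t (V : voter_matrix n t) (p : proposal t) : bool :=
  (n <= 2 * #|[set k | supports V k p]|)%N.

Definition mcol n t (V : voter_matrix n t) (i : 'I_t) : rat :=
  (#|[set k | V k i]|)%:R / n%:R.

Definition mV n t (V : voter_matrix n t) : rat :=
  (\sum_(i < t) mcol V i) / t%:R.

Definition Rp n t (V : voter_matrix n t) (p : proposal t) : rat :=
  (\sum_(i < t) (if p i then mcol V i else 1 - mcol V i)) / t%:R.

Definition rp n t (V : voter_matrix n t) (p : proposal t) : rat :=
  Rp V p / mV V.

(* r_V : maximum of r_p over proposals supported by V (0 if there is none;
   the theorem shows one always exists, and r_p >= 0). *)
Definition rV n t (V : voter_matrix n t) : rat :=
  \big[Num.max/0]_(p : proposal t | supported V p) rp V p.

(* Main.v *)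
Require Import Defs.
From mathcomp Require Import all_boot all_order all_algebra.
From mathcomp Require Import ring lra zify.
Import Order.TTheory GRing.Theory Num.Theory.
Local Open Scope ring_scope.

Definition pj t (j : nat) : proposal t := [ffun i : 'I_t => (i < j)%N].
Definition pC t (p : proposal t) : proposal t := [ffun i => ~~ p i].
Arguments pC {t}.
Definition S {n t} (V : voter_matrix n t) (p : proposal t) : rat :=
  \sum_(i < t) (if p i then mcol V i else 1 - mcol V i).

Section L.
Variables (n t : nat) (V : voter_matrix n t).
Hypothesis n0 : (0 < n)%N.

Lemma colC i : [set k | ~~ V k i] = ~: [set k | V k i].
Proof. by apply/setP => k; rewrite !inE. Qed.

Lemma colN i : (#|[set k | ~~ V k i]| + #|[set k | V k i]| = n)%N.
Proof. by rewrite colC addnC cardsC card_ord. Qed.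

Lemma mcol_ge0 i : 0 <= mcol V i.
Proof. by rewrite /mcol divr_ge0 // ler0n. Qed.

Lemma mcol_le1 i : mcol V i <= 1.
Proof.
rewrite /mcol ler_pdivrMr ?ltr0n // mul1r ler_nat.
by have := colN i; lia.
Qed.

Lemma mcol_ge12 i : col_majority_Y V -> 1/2 <= mcol V i.
Proof.
move=> /(_ i) H.
rewrite /mcol ler_pdivlMr ?ltr0n //.
have : (n <= 2 * #|[set k | V k i]|)%N by have := colN i; lia.
rewrite -(ler_nat rat) natrM => H2.
have -> : (1 / 2 * n%:R : rat) = n%:R / 2 by field.
rewrite ler_pdivrMr //; lra.
Qed.

Lemma hdistC k p : hdist V k (pC p) = (t - hdist V k p)%N.
Proof.
rewrite /hdist.
have -> : [set i | V k i != pC p i] = ~: [set i | V k i != p i].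
  by apply/setP => i; rewrite !inE ffunE; case: (V k i); case: (p i).
by rewrite cardsCs card_ord setCK.
Qed.

Lemma hdist_le k p : (hdist V k p <= t)%N.
Proof. by apply: leq_trans (max_card _) _; rewrite card_ord. Qed.

Lemma supp_or p : supported V p || supported V (pC p).
Proof.
rewrite /supported.
set A := [set k | supports V k p]; set B := [set k | supports V k (pC p)].
have U : A :|: B = setT.
  apply/setP => k; rewrite !inE /supports hdistC.
  have := hdist_le k p; set d := hdist V k p => hd.
  apply/orP; case: (leqP (2 * d) t) => h; [by left | right; lia].
have := cardsU A B; rewrite U cardsT card_ord => h.
case: (leqP n (2 * #|A|)) => //= h1. move: h h1. set a := #|A|. set b := #|B|. set c := #|A :&: B|. clearbody a b c. lia.
Qed.

Lemma S_C p : S V (pC p) = t%:R - S V p.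
Proof.
rewrite /S.
transitivity (\sum_(i < t) (1 - (if p i then mcol V i else 1 - mcol V i))).
  by apply: eq_bigr => i _; rewrite ffunE; case: (p i) => /=; ring.
by rewrite sumrB sumr_const card_ord.
Qed.

Lemma S_step j : S V (pj t j.+1) <= S V (pj t j) + 1.
Proof.
rewrite /S; case: (ltnP j t) => hj.
  pose J := Ordinal hj.
  rewrite (bigD1 J) //= [X in _ <= X + _](bigD1 J) //= !ffunE /= ltnSn ltnn.
  have -> : \sum_(i < t | i != J) (if pj t j.+1 i then mcol V i else 1 - mcol V i)
     = \sum_(i < t | i != J) (if pj t j i then mcol V i else 1 - mcol V i).
    apply: eq_bigr => i hi; rewrite !ffunE ltnS leq_eqVlt.
    have -> : (nat_of_ord i == j) = false.
      by apply/negbTE; apply: contra hi => /eqP e; apply/eqP/val_inj.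
    by [].
  have := mcol_le1 J; have := mcol_ge0 J; lra.
have -> : \sum_(i < t) (if pj t j.+1 i then mcol V i else 1 - mcol V i)
     = \sum_(i < t) (if pj t j i then mcol V i else 1 - mcol V i).
  apply: eq_bigr => i _; rewrite !ffunE.
  have h1 := ltn_ord i.
  have -> : (i < j.+1)%N by lia.
  by have -> : (i < j)%N by lia.
lra.
Qed.

Lemma S_all : S V (pj t t) = \sum_(i < t) mcol V i.
Proof. by apply: eq_bigr => i _; rewrite ffunE ltn_ord. Qed.

Lemma S_none : S V (pj t 0) = \sum_(i < t) (1 - mcol V i).
Proof. by apply: eq_bigr => i _; rewrite ffunE ltn0. Qed.

Hypothesis maj : col_majority_Y V.
Hypothesis t0 : (0 < t)%N.

Lemma S_all_ge : t%:R / 2 <= S V (pj t t).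
Proof.
rewrite S_all.
have -> : (t%:R / 2 : rat) = \sum_(i < t) (1/2) by rewrite sumr_const card_ord; field.
apply: ler_sum => i _; exact: mcol_ge12.
Qed.

Lemma S_none_le : S V (pj t 0) <= t%:R / 2.
Proof.
rewrite S_none.
have -> : (t%:R / 2 : rat) = \sum_(i < t) (1/2) by rewrite sumr_const card_ord; field.
apply: ler_sum => i _; have := mcol_ge12 i maj; lra.
Qed.

Lemma Rp_ge p a : a <= S V p -> a / t%:R <= Rp V p.
Proof.
move=> h; rewrite /Rp; apply: ler_wpM2r => //.
by rewrite invr_ge0 ler0n.
Qed.

Lemma part1 : exists p : proposal t, supported V p /\ 1 / 2 - 1 / t%:R <= Rp V p.
Proof.
have ex : exists j, t%:R / 2 <= S V (pj t j) by exists t; exact: S_all_ge.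
case: (ex_minnP ex) => j hj hmin.
have hup : S V (pj t j) <= t%:R / 2 + 1.
  case: j hj hmin => [|j] hj hmin.
    have := S_none_le; lra.
  have : ~~ (t%:R / 2 <= S V (pj t j)).
    by apply/negP => /hmin; rewrite ltnn.
  rewrite -ltNge => h; have := S_step j; lra.
have tp : (0 : rat) < t%:R by rewrite ltr0n.
have e : (1 / 2 - 1 / t%:R : rat) = (t%:R / 2 - 1) / t%:R by field; lra.
case/orP: (supp_or (pj t j)) => hs.
  exists (pj t j); split => //; rewrite e; apply: Rp_ge; lra.
exists (pC (pj t j)); split => //; rewrite e; apply: Rp_ge; rewrite S_C; lra.
Qed.

Lemma Rp_all : Rp V (pj t t) = mV V.
Proof. change (S V (pj t t) / t%:R = mV V); by rewrite S_all. Qed.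

Lemma mV_ge : 1/2 <= mV V.
Proof.
rewrite -Rp_all; have := Rp_ge _ _ S_all_ge.
have tp : (0 : rat) < t%:R by rewrite ltr0n.
have -> : (t%:R / 2 / t%:R : rat) = 1/2 by field; lra.
by [].
Qed.

Lemma Rp_ge0 p : 0 <= Rp V p.
Proof.
rewrite /Rp divr_ge0 ?ler0n // sumr_ge0 // => i _.
have := mcol_ge0 i; have := mcol_le1 i; case: (p i); lra.
Qed.

Lemma card_sum (T : finType) (P : pred T) : #|[set x | P x]| = (\sum_(x : T) (P x : nat))%N.
Proof.
rewrite -sum1_card big_mkcond /=; apply: eq_bigr => x _; rewrite inE; by case: (P x).
Qed.

Lemma supp_all : 3/4 < mV V -> supported V (pj t t).
Proof.
move=> hm.
pose c i := #|[set k | V k i]|.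
pose N i := #|[set k | ~~ V k i]|.
pose h k := hdist V k (pj t t).
have hh : forall k, h k = #|[set i | ~~ V k i]|.
  move=> k; rewrite /h /hdist; apply: eq_card => i.
  by rewrite !inE ffunE ltn_ord; case: (V k i).
have dc : (\sum_k h k = \sum_i N i)%N.
  rewrite (eq_bigr _ (fun k _ => hh k)) /N.
  under eq_bigr do rewrite card_sum.
  under [RHS]eq_bigr do rewrite card_sum.
  exact: exchange_big.
have tot : (\sum_i N i + \sum_i c i = n * t)%N.
  rewrite -big_split /= (eq_bigr (fun _ => n)); last by move=> i _; exact: colN.
  by rewrite sum_nat_const card_ord mulnC.
have hC : (3 * (n * t) < 4 * \sum_i c i)%N.
  have e : mV V = (\sum_i c i)%:R / (n%:R * t%:R).
    rewrite /mV /mcol natr_sum -mulr_suml invfM mulrA //.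
  move: hm; rewrite e ltr_pdivlMr; last by rewrite mulr_gt0 // ltr0n.
  rewrite -natrM -(ltr_nat rat) !natrM => H; lra.
set A := [set k | supports V k (pj t t)].
have hB : (#|~: A| * t.+1 <= 2 * \sum_k h k)%N.
  rewrite (bigID (fun k => k \in A)) /= mulnDr.
  apply: leq_trans (leq_addl _ _).
  rewrite -sum_nat_const big_distrr /=.
  rewrite (eq_bigl (fun k => k \notin A)); last by move=> k; rewrite inE.
  apply: leq_sum => k.
  by rewrite !inE /supports -ltnNge.
have hA := cardsC A; rewrite card_ord in hA.
rewrite /supported -/A.
case: (leqP n (2 * #|A|)) => // h1.
move: hB hA h1 hC tot; rewrite dc.
set a := #|A|; set b := #|~: A|; set s1 := (\sum_i N i)%N; set s2 := (\sum_i c i)%N.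
clearbody a b s1 s2 => hB hA h1 hC tot.
nia.
Qed.

Lemma main_sec :
  (exists p : proposal t, supported V p /\ 1 / 2 - 1 / t%:R <= Rp V p) /\
  2 / 3 - 4 / (3 * t%:R) <= rV V.
Proof.
split; first exact: part1.
have tp : (0 : rat) < t%:R by rewrite ltr0n.
have e4 : (4 / (3 * t%:R) : rat) = 4 / 3 * (1 / t%:R) by field; lra.
have w0 : (0 : rat) <= 1 / t%:R by rewrite divr_ge0 // ler0n.
have hM := mV_ge.
rewrite /rV e4.
case: (lerP (mV V) (3/4)) => hm.
  have [p [hs hR]] := part1.
  apply: (le_trans _ (le_bigmax_cond _ _ hs)).
  rewrite /rp.
  have R0 := Rp_ge0 p.
  move: hR R0 w0; set w := 1 / t%:R; set R := Rp V p => hR R0 w0.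
  have hu : mV V * (mV V)^-1 = 1 by rewrite divff //; apply/eqP => e; rewrite e in hM; lra.
  have u0 : 0 < (mV V)^-1 by rewrite invr_gt0; lra.
  move: hu u0; set u := (mV V)^-1 => hu u0.
  case: (lerP 0 (1/2 - w)) => ha; nra.
apply: (le_trans _ (le_bigmax_cond _ _ (supp_all hm))).
rewrite /rp Rp_all divff; first lra.
by apply/eqP => e; rewrite e in hM; lra.
Qed.

End L.

Theorem lemma5p2 (n t : nat) (V : voter_matrix n t) :
  (0 < n)%N -> (0 < t)%N -> col_majority_Y V ->
  (exists p : proposal t, supported V p /\ 1 / 2 - 1 / t%:R <= Rp V p) /\
  2 / 3 - 4 / (3 * t%:R) <= rV V.
Proof. move=> hn ht hm; exact: main_sec. Qed.
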